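(* The set $\mathcal{I}_{\mathrm{str}}(\Lambda)$ has the cardinality of the continuum.
   Context: Let $\mathbf{2}=\{0,1\}$. A partial function of arity $n$ on $\mathbf{2}$ is a map $f:\operatorname{dom} f\to\mathbf{2}$ with $\operatorname{dom} f\subseteq \mathbf{2}^n$; it is total if $\operatorname{dom} f=\mathbf{2}^n$. $P_{\mathbf{2}}$ is the set of all partial functions, $O_{\mathbf{2}}$ the set of total ones. Composition $F=f(g_1,\dots,g_n)$ is given by $F(\mathbf{x})=f(g_1(\mathbf{x}),\dots,g_n(\mathbf{x}))$ on $\operatorname{dom} F=\{\mathbf{x}\in\bigcap_i\operatorname{dom} g_i : (g_1(\mathbf{x}),\dots,g_n(\mathbf{x}))\in\operatorname{dom} f\}$. A partial clone is a composition-closed subset of $P_{\mathbf{2}}$ containing all projections; a total clone is one contained in $O_{\mathbf{2}}$. A partial clone $X$ is strong if it contains every restriction of each of its members. For a total clone $C$, $\mathcal{I}_{\mathrm{str}}(C)$ is the set of all strong partial clones $X$ with $X\cap O_{\mathbf{2}}=C$. $\Lambda$ is the total clone generated by the binary conjunction $\land$ and the constant functions $c_0,c_1$. *)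

(* Defs.v *)
From mathcomp Require Import all_boot.
From mathcomp Require Import boolp classical_sets cardinality.
Set Implicit Arguments. Unset Strict Implicit. Unset Printing Implicit Defensive.
Local Open Scope classical_set_scope.

(* A partial function on 2 = bool: an arity n and a map 2^n -> option 2;
   dom f = {x | fn f x <> None}. *)
Record pfun := PFun { ar : nat; fn : ar.-tuple bool -> option bool }.
Arguments fn : clear implicits.

(* Arities are >= 1 (standard convention for clones). *)
Definition P2 : set pfun := [set f | 0 < ar f].

Definition O2 : set pfun := [set f | 0 < ar f /\ forall x, fn f x <> None].

Definition pcomp n m (f : n.-tuple bool -> option bool)
  (gs : 'I_n -> m.-tuple bool -> option bool) (x : m.-tuple bool) : option bool :=
  if [forall i : 'I_n, gs i x != None]
  then f [tuple odflt false (gs i x) | i < n]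
  else None.

Definition proj (m : nat) (i : 'I_m) : pfun := PFun (fun x : m.-tuple bool => Some (tnth x i)).

Definition partial_clone (X : set pfun) : Prop :=
  X `<=` P2 /\
  (forall m (i : 'I_m), X (proj i)) /\
  (forall (f : pfun) (m : nat) (gs : 'I_(ar f) -> m.-tuple bool -> option bool),
      X f -> (forall i, X (PFun (gs i))) -> X (PFun (pcomp (fn f) gs))).

Definition total_clone (X : set pfun) : Prop := partial_clone X /\ X `<=` O2.

Definition restriction (g f : pfun) : Prop :=
  exists e : ar g = ar f,
    forall x b, fn g x = Some b -> fn f (tcast e x) = Some b.

Definition strong (X : set pfun) : Prop :=
  forall f g, X f -> restriction g f -> X g.

Definition strong_partial_clone (X : set pfun) : Prop := partial_clone X /\ strong X.

Definition gen_clone (S : set pfun) : set pfun :=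
  \bigcap_(X in [set X | partial_clone X /\ S `<=` X]) X.

Definition and2 : pfun :=
  PFun (fun x : 2.-tuple bool => Some (tnth x ord0 && tnth x ord_max)).
Definition c0 : pfun := PFun (fun _ : 1.-tuple bool => Some false).
Definition c1 : pfun := PFun (fun _ : 1.-tuple bool => Some true).

Definition Lambda : set pfun := gen_clone [set and2; c0; c1].

Definition I_str (C : set pfun) : set (set pfun) :=
  [set X | strong_partial_clone X /\ X `&` O2 = C].

(* Main.v *)
Require Import Defs.
From mathcomp Require Import all_boot.
From mathcomp Require Import boolp classical_sets cardinality.
Local Open Scope classical_set_scope.
Local Open Scope card_scope.
Set Implicit Arguments. Unset Strict Implicit. Unset Printing Implicit Defensive.

Definition pres (I : Type) (R : (I -> bool) -> Prop) (f : pfun) : Prop :=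
  forall r : I -> (ar f).-tuple bool,
    (forall i, fn f (r i) <> None) ->
    (forall j : 'I_(ar f), R (fun i => tnth (r i) j)) ->
    R (fun i => odflt false (fn f (r i))).

Lemma pres_proj I (R : (I -> bool) -> Prop) m (i : 'I_m) : pres R (Defs.proj i).
Proof. by move=> r _ H; exact: H. Qed.

Lemma pres_comp I (R : (I -> bool) -> Prop) (f : pfun) m
   (gs : 'I_(ar f) -> m.-tuple bool -> option bool) :
  pres R f -> (forall i, pres R (PFun (gs i))) -> pres R (PFun (Defs.pcomp (fn f) gs)).
Proof.
move=> Hf Hg r /= Hdom Hcol.
have Hall : forall i, [forall k, gs k (r i) != None].
  move=> i; move: (Hdom i); rewrite /Defs.pcomp; by case: ifP.
pose r' i := [tuple odflt false (gs k (r i)) | k < ar f].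
have Hd' : forall i, fn f (r' i) <> None.
  move=> i; move: (Hdom i); by rewrite /Defs.pcomp Hall.
have Hc' : forall k, R (fun i => tnth (r' i) k).
  move=> k.
  have -> : (fun i => tnth (r' i) k) = (fun i => odflt false (gs k (r i))).
    by apply: funext => i; rewrite tnth_mktuple.
  apply: (Hg k) => //= i; exact/eqP/(forallP (Hall i) k).
have := Hf r' Hd' Hc'.
have -> : (fun i => odflt false (Defs.pcomp (fn f) gs (r i))) = (fun i => odflt false (fn f (r' i))).
  by apply: funext => i; rewrite /Defs.pcomp Hall.
done.
Qed.

Lemma pres_restr I (R : (I -> bool) -> Prop) (f g : pfun) :
  pres R f -> restriction g f -> pres R g.
Proof.
case: f g => n F [n' G] Hf [/= e He]; subst n'.
move=> r /= Hdom Hcol.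
have HF : forall i, F (r i) = G (r i).
  move=> i; move: (Hdom i) (He (r i)); case: (G (r i)) => // b _ /(_ b erefl).
  by rewrite tcast_id.
have := Hf r; rewrite /=.
have -> : (fun i => odflt false (F (r i))) = (fun i => odflt false (G (r i))).
  by apply: funext => i; rewrite HF.
apply=> // i; rewrite HF; exact: Hdom.
Qed.

Definition Rand (x : option bool -> bool) : Prop :=
  x None = x (Some false) && x (Some true).

Lemma gen_sub (S X : set pfun) : partial_clone X -> S `<=` X -> gen_clone S `<=` X.
Proof. by move=> HX HS f Hf; apply: Hf. Qed.

Lemma total_Lambda (f : pfun) :
  0 < ar f -> (forall x, fn f x <> None) -> pres Rand f -> Lambda f.
Proof.
case: f => n Ff /= n0 Htot Hp.
case: n Ff n0 Htot Hp => // n Ff _ Htot Hp.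
pose F x := odflt false (Ff x).
have HFf : forall x, Ff x = Some (F x).
  by move=> x; rewrite /F; move: (Htot x); case: (Ff x).
pose meet (x y : n.+1.-tuple bool) := [tuple tnth x j && tnth y j | j < n.+1].
have Hm : forall x y, F (meet x y) = F x && F y.
  move=> x y.
  have := Hp (fun o => match o with None => meet x y | Some false => x | Some true => y end).
  apply.
  - by case=> [[]|].
  - by move=> j; rewrite /Rand /= tnth_mktuple.
rewrite /Lambda /gen_clone /bigcap /= => Y [HY HS].
have Hand : Y and2 by apply: HS; left; left.
have Hc0 : Y c0 by apply: HS; left; right.
have Hc1 : Y c1 by apply: HS; right.
pose i0 : 'I_n.+1 := ord0.
have Hc : forall b, Y (PFun (fun _ : n.+1.-tuple bool => Some b)).
  move=> b.
  have := HY.2.2 (if b then c1 else c0) n.+1 (fun _ => fn (Defs.proj i0)).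
  have -> : Defs.pcomp (fn (if b then c1 else c0)) (fun _ => fn (Defs.proj i0))
            = (fun _ : n.+1.-tuple bool => Some b).
    apply: funext => x; rewrite /Defs.pcomp.
    have -> : [forall k : 'I_(ar (if b then c1 else c0)), Some (tnth x i0) != None].
      by apply/forallP.
    by case: b.
  apply; first by case: b.
  by move=> _; apply: HY.2.1.
pose one := [tuple true | j < n.+1].
have Hone : forall x, meet x one = x.
  by move=> x; apply: eq_from_tnth => j; rewrite !tnth_mktuple andbT.
case Fone : (F one).
  2: { have -> : Ff = (fun _ => Some false).
         apply: funext => x; rewrite HFf -(Hone x) Hm Fone andbF //.
       exact: Hc. }
pose cou (k : 'I_n.+1) := [tuple j != k | j < n.+1].
pose s k := F (cou k).
pose P (x : n.+1.-tuple bool) (j : nat) := if j < n.+1 then tnth x (inord j) || s (inord j) else true.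
pose G k x := \big[andb/true]_(j < k) P x j.
have GS : forall k x, G k.+1 x = G k x && P x k.
  by move=> k x; rewrite /G big_ord_recr.
have claim1 : forall x k, k <= n.+1 -> F [tuple (if j < k then tnth x j else true) | j < n.+1] = G k x.
  move=> x; elim=> [|k IH] Hk.
    rewrite /G big_ord0 -Fone; congr F; apply: eq_from_tnth => j.
    by rewrite !tnth_mktuple.
  pose kk : 'I_n.+1 := Ordinal Hk.
  have -> : [tuple (if j < k.+1 then tnth x j else true) | j < n.+1] =
            meet [tuple (if j < k then tnth x j else true) | j < n.+1]
                 (if tnth x kk then one else cou kk).
    apply: eq_from_tnth => j; rewrite !tnth_mktuple ltnS leq_eqVlt.
    case: (ltngtP j k) => Hjk.
    - case: (tnth x kk); rewrite tnth_mktuple ?andbT //.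
      by rewrite -val_eqE /= (ltn_eqF Hjk) andbT.
    - by case: (tnth x kk); rewrite tnth_mktuple // -val_eqE /= (gtn_eqF Hjk).
    - have -> : j = kk by apply: val_inj.
      by case E: (tnth x kk); rewrite tnth_mktuple ?eqxx.
  rewrite Hm IH ?(ltnW Hk) // GS; congr andb.
  rewrite /P Hk (_ : inord k = kk); last by apply: val_inj; rewrite /= inordK.
  by case: (tnth x kk); rewrite ?Fone.
have claim2 : forall k, k <= n.+1 -> Y (PFun (fun x : (n.+1).-tuple bool => Some (G k x))).
  elim=> [|k IH] Hk.
    have -> : (fun x : (n.+1).-tuple bool => Some (G 0 x)) = (fun _ => Some true).
      by apply: funext => x; rewrite /G big_ord0.
    exact: Hc.
  pose kk : 'I_n.+1 := Ordinal Hk.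
  have HP : forall x, P x k = tnth x kk || s kk.
    by move=> x; rewrite /P Hk (_ : inord k = kk) //; apply: val_inj; rewrite /= inordK.
  case Hs: (s kk).
    have -> : (fun x : (n.+1).-tuple bool => Some (G k.+1 x)) = (fun x => Some (G k x)).
      by apply: funext => x; rewrite GS HP Hs orbT andbT.
    exact: IH (ltnW Hk).
  pose gs (i : 'I_2) := if i == ord0 then (fun x : (n.+1).-tuple bool => Some (G k x)) else fn (Defs.proj kk).
  have := HY.2.2 and2 n.+1 gs Hand.
  have -> : Defs.pcomp (fn and2) gs = (fun x => Some (G k.+1 x)).
    apply: funext => x; rewrite /Defs.pcomp.
    have -> : [forall i, gs i x != None] by apply/forallP => i; rewrite /gs; case: ifP.
    by rewrite /= !tnth_mktuple /gs /= GS HP Hs orbF.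
  apply => i; rewrite /gs; case: ifP => _; first exact: IH (ltnW Hk).
  exact: HY.2.1.
have -> : Ff = (fun x => Some (G n.+1 x)).
  apply: funext => x; rewrite HFf -claim1 //; congr (Some (F _)).
  by apply: eq_from_tnth => j; rewrite tnth_mktuple ltn_ord.
exact: claim2.
Qed.

Module EF.
Import mathcomp.boot.fintype mathcomp.boot.finset.
Local Close Scope classical_set_scope.

Definition Zs n (x : n.-tuple bool) : {set 'I_n} := [set j | ~~ tnth x j].
Definition fzf n (x : n.-tuple bool) : option bool :=
  if (#|Zs x| == 1) || (#|Zs x| == 3) then Some true
  else if #|Zs x| == n then Some false else None.
Definition fz n : pfun := PFun (@fzf n).

Definition Gam n (x : {set 'I_n} -> bool) : Prop :=
  (forall a b c : 'I_n, a != b -> a != c -> b != c ->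
     x [set a] -> x [set b] -> x [set c] -> x [set a; b; c]%SET) /\
  (forall a b c : 'I_n, a != b -> a != c -> b != c -> x [set a; b; c]%SET -> x [set a]) /\
  ((forall a, x [set a]) -> x [set: 'I_n]%SET).

Lemma card3U (T : finType) (A B C : {set T}) : #|A :|: B :|: C| <= #|A| + #|B| + #|C|.
Proof.
apply: (leq_trans (leq_card_setU _ _).1); rewrite leq_add2r.
exact: (leq_card_setU _ _).1.
Qed.

Lemma fzf_dom n (x : n.-tuple bool) : fzf x <> None ->
  [|| #|Zs x| == 1, #|Zs x| == 3 | #|Zs x| == n].
Proof. rewrite /fzf; case: (#|Zs x| == 1) => //; case: (#|Zs x| == 3) => //; by case: (#|Zs x| == n). Qed.

Lemma fzf_out n (x : n.-tuple bool) : 3 < n ->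
  odflt false (fzf x) = (#|Zs x| == 1) || (#|Zs x| == 3).
Proof. by move=> Hn; rewrite /fzf; case: ifP => // _; case: ifP. Qed.

Lemma perm3 (T : finType) (a b c : T) : [set b; a; c]%SET = [set a; b; c]%SET.
Proof. by apply/setP => x; rewrite !inE; case: (x == a); case: (x == b); case: (x == c). Qed.

Lemma perm3' (T : finType) (a b c : T) : [set c; a; b]%SET = [set a; b; c]%SET.
Proof. by apply/setP => x; rewrite !inE; case: (x == a); case: (x == b); case: (x == c). Qed.

Lemma third n (a b : 'I_n) : 2 < n -> exists c : 'I_n, (c != a) && (c != b).
Proof.
move=> Hn.
have : 0 < #|~: [set a; b]%SET|.
  have := cardsC [set a; b]%SET; rewrite card_ord.
  have : #|[set a; b]%SET| <= 2 by rewrite cards2; case: (a != b).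
  move=> H1 H2; rewrite -(ltn_add2l #|[set a; b]%SET|) addn0 H2.
  exact: (leq_ltn_trans H1).
case/card_gt0P => c; rewrite !inE negb_or => H; by exists c.
Qed.

Lemma cards3 n (a b c : 'I_n) : a != b -> a != c -> b != c -> #|[set a; b; c]%SET| = 3.
Proof.
move=> ab ac bc.
rewrite -finset.setUA cardsU1 cards2 bc !inE negb_or ab ac.
by [].
Qed.

Lemma pres_Gam_fz n m : 10 <= m -> 2 < n -> m != n -> pres (@Gam n) (fz m).
Proof.
move=> Hm Hn Hmn r Hdom Hcol.
pose Z S := Zs (r S).
have Hd S : [|| #|Z S| == 1, #|Z S| == 3 | #|Z S| == m] := fzf_dom (Hdom S).
have -> : (fun S => odflt false (fn (fz m) (r S))) =
          (fun S => (#|Z S| == 1) || (#|Z S| == 3)).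
  by apply: funext => S; rewrite /= fzf_out //; apply: leq_trans Hm.
pose small S := (#|Z S| == 1) || (#|Z S| == 3).
have H1 a b c : a != b -> a != c -> b != c ->
    Z [set a; b; c]%SET \subset Z [set a] :|: Z [set b] :|: Z [set c].
  move=> ab ac bc; apply/subsetP => j; rewrite /Z /Zs !inE.
  apply: contraLR; rewrite !negb_or !negbK => /andP[/andP[ha hb] hc].
  exact: ((Hcol j).1 a b c ab ac bc ha hb hc).
have H2 a b c : a != b -> a != c -> b != c -> Z [set a] \subset Z [set a; b; c]%SET.
  move=> ab ac bc; apply/subsetP => j; rewrite /Z /Zs !inE; apply: contraNN => h.
  exact: ((Hcol j).2.1 a b c ab ac bc h).
have H3 j : j \in Z [set: 'I_n]%SET -> exists a, j \in Z [set a].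
  move=> hj; case: (boolP [exists a, j \in Z [set a]]) => [/existsP//|/existsPn Hn'].
  exfalso; move: hj; rewrite /Z /Zs inE (Hcol j).2.2 // => a.
  by move: (Hn' a); rewrite /Z /Zs inE negbK.
have sm_le S : small S -> #|Z S| <= 3 by rewrite /small; case/orP => /eqP ->.
have nsm S : ~~ small S -> #|Z S| = m.
  by move: (Hd S); rewrite /small; case: (#|Z S| == 1) => //; case: (#|Z S| == 3) => //= /eqP.
have bns S : #|Z S| <= 9 -> small S.
  move=> h; apply/negPn/negP => /nsm e; rewrite e in h.
  by have := leq_trans Hm h.
have le9 (A B C : {set 'I_m}) : #|A| <= 3 -> #|B| <= 3 -> #|C| <= 3 -> #|A :|: B :|: C| <= 9.
  move=> hA hB hC; apply: leq_trans (card3U _ _ _) _.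
  exact: (leq_trans (leq_add (leq_add hA hB) hC)).
split; [|split].
- move=> a b c ab ac bc sa sb sc; apply: bns.
  apply: leq_trans (subset_leq_card (H1 _ _ _ ab ac bc)) _.
  exact: le9 (sm_le _ sa) (sm_le _ sb) (sm_le _ sc).
- move=> a b c ab ac bc sabc; apply: bns.
  apply: leq_trans (subset_leq_card (H2 _ _ _ ab ac bc)) _.
  exact: leq_trans (sm_le _ sabc) _.
- move=> Hs; apply/negPn/negP => Hns.
  have HT : Z [set: 'I_n]%SET = [set: 'I_m]%SET.
    by apply/eqP; rewrite eqEcard subsetT /= cardsT card_ord (nsm _ Hns).
  pose Y a := Z [set a].
  have HW a b c : a != b -> a != c -> b != c ->
      (#|Y a :|: Y b :|: Y c| == 1) || (#|Y a :|: Y b :|: Y c| == 3).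
    move=> ab ac bc.
    have E : Z [set a; b; c]%SET = Y a :|: Y b :|: Y c.
      apply/eqP; rewrite eqEsubset H1 //= !subUset H2 //=.
      apply/andP; split; [rewrite -(perm3 a b c) | rewrite -(perm3' a b c)]; apply: H2 => //; by rewrite eq_sym.
    rewrite -E; apply: bns; rewrite E.
    exact: le9 (sm_le _ (Hs a)) (sm_le _ (Hs b)) (sm_le _ (Hs c)).
  have Hcov j : exists a, j \in Y a by apply: H3; rewrite HT inE.
  case: (boolP [exists a, #|Y a| == 3]).
  + case/existsP => a /eqP Ha.
    have sub b : Y b \subset Y a.
      case: (eqVneq b a) => [->//|ba].
      have [c /andP[ca cb]] := third a b Hn.
      have ab : a != b by rewrite eq_sym.
      have ac : a != c by rewrite eq_sym.
      have bc : b != c by rewrite eq_sym.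
      have := HW a b c ab ac bc.
      set U := Y a :|: Y b :|: Y c => hU.
      have YU : Y a \subset U by apply/subsetP => x hx; rewrite !in_setU hx.
      have cU : #|U| = 3.
        by move: hU (subset_leq_card YU); rewrite Ha; case/orP => /eqP ->.
      have EU : U = Y a by apply/eqP; rewrite eq_sym eqEcard YU cU Ha.
      by rewrite -EU; apply/subsetP => x hx; rewrite !in_setU hx orbT.
    have : [set: 'I_m]%SET \subset Y a.
      by apply/subsetP => j _; have [b hb] := Hcov j; exact: (subsetP (sub b)).
    move/subset_leq_card; rewrite cardsT card_ord Ha => h.
    by have := leq_trans Hm h.
  + move/existsPn => H1s.
    have Hsing a : #|Y a| == 1.
      by move: (Hs a) (H1s a); rewrite /small; case/orP => // ->.
    have [psi Hpsi] : exists psi : 'I_n -> 'I_m, forall a, Y a = [set psi a].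
      by apply: (@fin_all_exists _ (fun _ => 'I_m) (fun a x => Y a = [set x])) => a; apply/cards1P/Hsing.
    case: (boolP (injectiveb psi)).
    * move/injectiveP => inj.
      have h1 : n <= m by have := leq_card psi inj; rewrite !card_ord.
      have h2 : m <= n.
        have : [set: 'I_m]%SET \subset psi @: [set: 'I_n]%SET.
          apply/subsetP => j _; have [a ha] := Hcov j.
          by move: ha; rewrite Hpsi inE => /eqP ->; apply: imset_f; rewrite inE.
        move/subset_leq_card; rewrite cardsT card_ord => h; apply: leq_trans h _.
        by apply: leq_trans (leq_imset_card _ _) _; rewrite cardsT card_ord.
      by move: Hmn; rewrite eqn_leq h2 h1.
    * case/injectivePn => a [b ab pab].
      have allc c : psi c = psi a.
        case: (eqVneq c a) => [->//|ca]; case: (eqVneq c b) => [->//|cb].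
        have ac : a != c by rewrite eq_sym.
        have bc : b != c by rewrite eq_sym.
        have := HW a b c ab ac bc.
        rewrite !Hpsi -pab finset.setUid cards2.
        by case: (eqVneq (psi a) (psi c)).
      have : [set: 'I_m]%SET \subset [set psi a].
        by apply/subsetP => j _; have [c hc] := Hcov j; move: hc; rewrite Hpsi allc.
      move/subset_leq_card; rewrite cardsT card_ord cards1 => h.
      by have := leq_trans Hm h.
Qed.

Lemma fz_self n : 3 < n -> ~ pres (@Gam n) (fz n).
Proof.
move=> Hn Hp.
pose T (S : {set 'I_n}) : {set 'I_n} := if (#|S| == 1) || (#|S| == 3) then S else [set: 'I_n]%SET.
pose r S : n.-tuple bool := [tuple j \notin T S | j < n].
have ZT S : Zs (r S) = T S by apply/setP => j; rewrite /Zs inE tnth_mktuple negbK.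
have nn : (n == 1) || (n == 3) = false.
  by apply/negbTE; rewrite negb_or; apply/andP; split; apply/eqP => e; rewrite e in Hn.
have T1 a : T [set a] = [set a] by rewrite /T cards1.
have TT : T [set: 'I_n]%SET = [set: 'I_n]%SET by rewrite /T; case: ifP.
have T3 a b c : a != b -> a != c -> b != c -> T [set a; b; c]%SET = [set a; b; c]%SET.
  by move=> ab ac bc; rewrite /T cards3 // orbT.
have := Hp r.
have Hcol : forall j : 'I_n, Gam (fun S => tnth (r S) j).
  move=> j; rewrite /Gam; split; [|split].
  - move=> a b c ab ac bc; rewrite !tnth_mktuple T3 // !T1 !inE; move=> h1 h2 h3.
    by rewrite !negb_or h1 h2 h3.
  - move=> a b c ab ac bc; rewrite !tnth_mktuple T3 // !T1 !inE; by rewrite !negb_or => /andP[/andP[-> _] _].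
  - by move=> /(_ j); rewrite tnth_mktuple T1 inE eqxx.
have Hdom : forall S, fn (fz n) (r S) <> None.
  move=> S; rewrite /= /fzf ZT /T; case h: ((#|S| == 1) || (#|S| == 3)); first by rewrite h.
  by rewrite cardsT card_ord nn eqxx.
move=> /(_ Hdom Hcol) [_ [_ H]].
have Hy : forall a, odflt false (fn (fz n) (r [set a])) by move=> a; rewrite /= /fzf ZT T1 cards1.
by move: (H Hy); rewrite /= /fzf ZT TT cardsT card_ord nn eqxx.
Qed.

Lemma pres_Rand_fz n : 6 < n -> pres Rand (fz n).
Proof.
move=> Hn r Hdom Hcol.
rewrite /Rand /= !fzf_out ?(leq_trans _ Hn) //.
have E : Zs (r None) = Zs (r (Some false)) :|: Zs (r (Some true)).
  apply/setP => j; rewrite !inE; move: (Hcol j); rewrite /Rand => ->.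
  by rewrite negb_and.
have D o := fzf_dom (Hdom o).
have nn : (n == 1) || (n == 3) = false.
  by apply/negbTE; rewrite negb_or; apply/andP; split; apply/eqP => e; rewrite e in Hn.
have full o : ~~ ((#|Zs (r o)| == 1) || (#|Zs (r o)| == 3)) -> Zs (r o) = [set: 'I_n]%SET.
  move=> h; apply/eqP; rewrite eqEcard subsetT cardsT card_ord /=.
  by move: (D o) h; case: (#|Zs (r o)| == 1); case: (#|Zs (r o)| == 3) => //= /eqP ->.
case S1 : ((#|Zs (r (Some false))| == 1) || (#|Zs (r (Some false))| == 3)); last first.
  by rewrite E full ?S1 // setTU cardsT card_ord nn.
case S2 : ((#|Zs (r (Some true))| == 1) || (#|Zs (r (Some true))| == 3)); last first.
  by rewrite E (full (Some true)) ?S2 // setUT cardsT card_ord nn.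
apply/negPn/negP => h0.
have := full None h0; rewrite E => hU.
have : #|Zs (r (Some false)) :|: Zs (r (Some true))| <= 6.
  apply: leq_trans (leq_card_setU _ _).1 _.
  have le3 o : (#|Zs (r o)| == 1) || (#|Zs (r o)| == 3) -> #|Zs (r o)| <= 3.
    by case/orP => /eqP ->.
  exact: leq_add (le3 _ S1) (le3 _ S2).
rewrite hU cardsT card_ord => h; by have := leq_trans Hn h.
Qed.

Lemma Gam_and n (x y : {set 'I_n} -> bool) : Gam x -> Gam y -> Gam (fun i => x i && y i).
Proof.
move=> [x1 [x2 x3]] [y1 [y2 y3]]; split; [|split].
- move=> a b c ab ac bc /andP[ha ha'] /andP[hb hb'] /andP[hc hc'].
  by rewrite (x1 a b c) ?(y1 a b c).
- move=> a b c ab ac bc /andP[h h']; by rewrite (x2 a b c) ?(y2 a b c).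
- move=> h; rewrite x3 ?y3 // => a; by case/andP: (h a).
Qed.

Lemma Gam_const n b : 0 < n -> Gam (fun _ : {set 'I_n} => b).
Proof. by move=> n0; rewrite /Gam; case: b => //; split => //; split => // /(_ (Ordinal n0)). Qed.

End EF.
Import EF.

Lemma gens_pres I (R : (I -> bool) -> Prop) :
  (forall x y, R x -> R y -> R (fun i => x i && y i)) ->
  R (fun _ => true) -> R (fun _ => false) -> [set and2; c0; c1] `<=` pres R.
Proof.
move=> Hand Ht Hf g [[->|->]|->] r Hd Hc //=.
exact: Hand (Hc ord0) (Hc ord_max).
Qed.

Lemma Rand_and (x y : option bool -> bool) : Rand x -> Rand y -> Rand (fun i => x i && y i).
Proof. by rewrite /Rand => hx hy; rewrite hx hy andbACA. Qed.

Definition XA (A : set nat) : set pfun :=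
  [set f | 0 < ar f /\ pres Rand f /\ forall k, ~ A k -> pres (@Gam (k + 10)) f].

Lemma XA_pc A : partial_clone (XA A).
Proof.
split; [by move=> f [] | split].
- move=> m i; split; first exact: (leq_ltn_trans (leq0n i) (ltn_ord i)).
  split; first exact: pres_proj.
  by move=> k _; apply: pres_proj.
- move=> f m gs [f0 [fR fG]] Hgs; split.
    by case: (Hgs (Ordinal f0)).
  split; first by apply: pres_comp => // i; case: (Hgs i) => _ [].
  move=> k nk; apply: pres_comp; first exact: fG.
  by move=> i; case: (Hgs i) => _ [_ ]; apply.
Qed.

Lemma XA_strong A : strong (XA A).
Proof.
move=> f g [f0 [fR fG]] Hr; have [e _] := Hr; split; first by rewrite e.
split; first exact: pres_restr Hr.
by move=> k nk; apply: pres_restr (fG k nk) Hr.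
Qed.

Lemma O2_pc : partial_clone O2.
Proof.
split; [by move=> f [] | split].
- move=> m i; split => //; exact: (leq_ltn_trans (leq0n i) (ltn_ord i)).
- move=> f m gs [f0 ftot] Hgs; split.
    by case: (Hgs (Ordinal f0)).
  move=> x /=; rewrite /Defs.pcomp.
  have -> : [forall k, gs k x != None].
    by apply/forallP => k; apply/eqP; case: (Hgs k) => _; apply.
  exact: ftot.
Qed.

Lemma gens_O2 : [set and2; c0; c1] `<=` O2.
Proof. by move=> g [[->|->]|->]. Qed.

Lemma gens_XA A : [set and2; c0; c1] `<=` XA A.
Proof.
move=> g hg; split; first by case: hg => [[->|->]|->].
split; first by apply: gens_pres hg => //; apply: Rand_and.
move=> k _; apply: gens_pres hg; first exact: Gam_and.
- by apply: Gam_const; rewrite addnC.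
- by apply: Gam_const; rewrite addnC.
Qed.

Lemma XA_total A : XA A `&` O2 = Lambda.
Proof.
apply/seteqP; split.
- move=> f [[f0 [fR _]] [_ ftot]]; exact: total_Lambda.
- move=> f hf; split.
  + exact: (gen_sub (XA_pc A) (gens_XA A)).
  + exact: (gen_sub O2_pc gens_O2).
Qed.

Lemma XA_Istr A : I_str Lambda (XA A).
Proof. split; [split; [exact: XA_pc | exact: XA_strong] | exact: XA_total]. Qed.

Definition FF k := fz (k + 10).

Lemma FF_in A k : A k -> XA A (FF k).
Proof.
move=> Ak; split; first by rewrite /= addnC. split; first by apply: pres_Rand_fz; rewrite addnC.
move=> k' nk'; apply: pres_Gam_fz.
- by rewrite leq_addl.
- by rewrite addnC.
- rewrite eqn_add2r; apply/eqP => e; subst k'; exact: nk'.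
Qed.

Lemma FF_out A k : ~ A k -> ~ XA A (FF k).
Proof. by move=> nAk [_ [_ H]]; apply: (fz_self (n := k + 10)); [rewrite addnC | exact: H]. Qed.

Lemma XA_inj : injective XA.
Proof.
move=> A B E; apply: funext => k; apply: propext; split => h.
- have [//|nB] := pselect (B k).
  by have := FF_in h; rewrite E => /(FF_out nB).
- have [//|nA] := pselect (A k).
  by have := FF_in h; rewrite -E => /(FF_out nA).
Qed.

Definition code (f : pfun) : nat :=
  pickle (ar f, [seq fn f x | x <- enum {: (ar f).-tuple bool}]).

Lemma code_inj : injective code.
Proof.
move=> [n F] [n' G] /(pcan_inj pickleK_inv) /= [e]; subst n' => /eq_in_map H.
congr PFun; apply: funext => x; apply: H; exact: mem_enum.
Qed.

Lemma card_le1 : [set: set nat] #<= I_str Lambda.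
Proof.
have inj : {in [set: set nat] &, injective XA} by move=> A B _ _; exact: XA_inj.
have E := inj_card_eq inj.
apply: (@card_le_trans _ _ _ (XA @` [set: set nat])).
  by move/card_eqPle: E => [].
apply: subset_card_le => X [A _ <-]; exact: XA_Istr.
Qed.

Lemma card_le2 : I_str Lambda #<= [set: set nat].
Proof.
apply: (@card_le_trans _ _ _ [set: set pfun]); first exact: card_leT.
pose G (X : set pfun) : set nat := code @` X.
have Ginj : {in [set: set pfun] &, injective G}.
  move=> X Y _ _ E; apply: funext => f; apply: propext; split => h.
  - have : (code @` Y) (code f) by rewrite -/(G Y) -E; exists f.
    by case=> g hg /code_inj <-.
  - have : (code @` X) (code f) by rewrite -/(G X) E; exists f.
    by case=> g hg /code_inj <-.
have E := inj_card_eq Ginj.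
apply: (@card_le_trans _ _ _ (G @` [set: set pfun])).
  by move/card_eqPle: E => [].
exact: card_leT.
Qed.

Theorem mainTheorem5 : I_str Lambda #= [set: set nat].
Proof. exact: Cantor_Bernstein card_le2 card_le1. Qed.
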